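(* Let $n\ge1$ and $p\in H_3(\mathbb{C}^n)$ be arbitrary. Then there exist: - an invertible linear change of variables $y_j=\sum_{k=1}^n\lambda_{jk}x_k$ ($1\le j\le n$); - $n$ linear forms $\ell_1,\dots,\ell_n\in H_1(\mathbb{C}^n)$; - a cubic form $q$ in the $n-1$ variables $y_2,\dots,y_n$, such that $$p(x_1,\dots,x_n) = \sum_{j=1}^n \ell_j^3(x_1,\dots,x_n) + q(y_2,\dots,y_n).$$ Consequently, every cubic form in $n$ variables over $\mathbb{C}$ is a sum of at most $\binom{n+1}{2}$ cubes of linear forms.
   Context: $H_d(\mathbb{C}^n)$ denotes the complex vector space of homogeneous polynomials of degree $d$ in $n$ variables. *)

(* Defs.v *)
From HB Require Import structures.
From mathcomp Require Import all_boot all_order all_algebra.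
Set Implicit Arguments. Unset Strict Implicit. Unset Printing Implicit Defensive.
Import Order.TTheory GRing.Theory Num.Theory.
Local Open Scope ring_scope.

(* A cubic form (element of H_3(F^n)), given by its coefficient tensor:
   p(x) = sum_{i,j,k} c(i,j,k) x_i x_j x_k.  Every cubic form arises this way. *)
Definition cform (F : nzRingType) (n : nat) := {ffun 'I_n * 'I_n * 'I_n -> F}.

Definition ceval (F : nzRingType) (n : nat) (c : cform F n) (x : 'cV[F]_n) : F :=
  \sum_(i < n) \sum_(j < n) \sum_(k < n) c (i, j, k) * x i 0 * x j 0 * x k 0.

Definition leval (F : nzRingType) (n : nat) (a : 'rV[F]_n) (x : 'cV[F]_n) : F :=
  \sum_(i < n) a 0 i * x i 0.

(* A cubic form (in the variables y_1..y_n) involving only y_2, .., y_n,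
   i.e. a cubic form in the n-1 variables y_2,..,y_n: every coefficient
   whose monomial contains y_1 (index 0) vanishes. *)
Definition avoids_first (F : nzRingType) (n : nat) (q : cform F n) : Prop :=
  forall i j k : 'I_n,
    (val i == 0%N) || (val j == 0%N) || (val k == 0%N) -> q (i, j, k) = 0.

(* Main.v *)
Require Import Defs.
From HB Require Import structures.
From mathcomp Require Import all_boot all_order all_algebra.
From mathcomp Require Import ring perm.
From Stdlib Require Classical_Prop.
Import Order.TTheory GRing.Theory Num.Theory.
Local Open Scope ring_scope.
Set Implicit Arguments. Unset Strict Implicit. Unset Printing Implicit Defensive.

Section S.
Variable F : closedFieldType.
Hypothesis hchar : [pchar F] =i pred0.

Lemma natF_neq0 m : (0 < m)%N -> (m%:R : F) != 0.
Proof. by move=> hm; rewrite (proj1 (pcharf0P F) hchar) -lt0n. Qed.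

Lemma root_ex m (a : F) : (0 < m)%N -> exists c : F, c ^+ m = a.
Proof.
move=> hm; have [x hx] := @solve_monicpoly F m (fun i => if i == 0%N then a else 0) hm.
exists x; rewrite hx (bigD1 (Ordinal hm)) //= expr0 mulr1 big1 ?addr0 //.
by move=> i; rewrite -val_eqE /= => /negbTE ->; rewrite mul0r.
Qed.

Lemma col0_unit n (v : 'cV[F]_n.+1) : v != 0 ->
  exists P : 'M[F]_n.+1, P \in unitmx /\ forall a, P a ord0 = v a 0.
Proof.
move=> vn0.
have [i hi] : exists i, v i 0 != 0.
  apply/existsP; apply: contraR vn0; rewrite negb_exists => /forallP H.
  by apply/eqP/matrixP => a b; rewrite (ord1 b) mxE; have := H a; rewrite negbK => /eqP.
pose w := xrow i ord0 v.
have hw : w ord0 0 = v i 0 by rewrite /w /xrow /row_perm mxE tpermR.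
pose G := \matrix_(a, b) if b == ord0 then w a 0 else (a == b)%:R : F.
have Gu : G \in unitmx.
  rewrite unitmxE det_trig.
    rewrite big_ord_recl big1 ?mulr1; last by move=> a _; rewrite mxE /= eqxx.
    by rewrite mxE eqxx hw unitfE.
  apply/forallP => a; apply/forallP => b; apply/implyP => hab.
  rewrite mxE; case: (b =P ord0) => [hb|_].
    by move: hab; rewrite hb.
  by case: (a =P b) => // hab0; move: hab; rewrite hab0 ltnn.
exists (xrow i ord0 G); split.
  by rewrite xrowE unitmx_mul Gu andbT unitmx_perm.
move=> a; rewrite /xrow /row_perm !mxE eqxx /w /xrow /row_perm.
by rewrite tpermK.
Qed.


Lemma bilE n m1 m2 (M : 'M[F]_n) (X : 'M[F]_(n, m1)) (Y : 'M[F]_(n, m2)) a b :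
  (X^T *m M *m Y) a b = \sum_j \sum_k X j a * M j k * Y k b.
Proof.
rewrite mxE [RHS]exchange_big; apply: eq_bigr => k _; rewrite mxE mulr_suml.
by apply: eq_bigr => j _; rewrite mxE.
Qed.

Lemma nz_quad n (M : 'M[F]_n) : M^T = M ->
  (forall u : 'cV[F]_n, (u^T *m M *m u) 0 0 = 0) -> M = 0.
Proof.
move=> hM H; apply/matrixP => i j; rewrite mxE.
have hd : forall a b : 'I_n, ((delta_mx a (0 : 'I_1) : 'cV[F]_n)^T *m M *m (delta_mx b (0 : 'I_1) : 'cV[F]_n)) 0 0 = M a b.
  move=> a b; rewrite trmx_delta -rowE mxE (bigD1 b) //= big1 ?addr0.
    by rewrite !mxE !eqxx mulr1.
  by move=> k hk; rewrite !mxE (negbTE hk) mulr0.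
have := H (delta_mx i 0 + delta_mx j 0).
rewrite mulmxDr [(_ + _)^T]linearD /= !mulmxDl.
have e : forall (A B : 'M[F]_1), (A + B) 0 0 = A 0 0 + B 0 0 by move=> A B; rewrite mxE.
have hdd : forall a, M a a = 0 by move=> a; rewrite -hd H.
rewrite !e !hd !hdd.
have -> : M j i = M i j by rewrite -{1}hM mxE.
rewrite add0r addr0 -mulr2n -mulr_natr => /eqP; rewrite mulf_eq0 => /orP [/eqP //|].
by rewrite (negbTE (natF_neq0 (isT : (0 < 2)%N))).
Qed.

Lemma corner n (IH : forall N : 'M[F]_n, N^T = N -> exists C : 'M[F]_n, N = C^T *m C)
  (M : 'M[F]_(1 + n)) : M^T = M -> M ord0 ord0 != 0 ->
  exists B : 'M[F]_(1 + n), M = B^T *m B.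
Proof.
move=> hM ha.
set a := M ord0 ord0 in ha.
have [s hs] := root_ex a (isT : (0 < 2)%N).
have s0 : s != 0 by apply: contraNneq ha => s0; rewrite -hs s0 expr0n.
set b := ursubmx M.
have hul : ulsubmx M = a%:M.
  rewrite [LHS]mx11_scalar mxE /a; congr (_%:M); rewrite mxE; congr (M _ _); exact: val_inj.
have hdl : dlsubmx M = b^T by rewrite /b trmx_ursub hM.
pose N := drsubmx M - a^-1 *: (b^T *m b).
have hN : N^T = N.
  by rewrite /N linearB /= linearZ /= trmx_mul trmxK trmx_drsub hM.
have [C hC] := IH N hN.
exists (block_mx (s%:M : 'M_1) (s^-1 *: b) 0 C).
rewrite tr_block_mx mulmx_block -[LHS]submxK hul hdl !trmx0 !mul0mx !mulmx0 !addr0.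
rewrite tr_scalar_mx !mul_scalar_mx scalerA mulfV // scale1r.
rewrite scale_scalar_mx -expr2 hs.
rewrite linearZ /= mul_mx_scalar scalerA mulfV // scale1r.
rewrite -hC /N -scalemxAr -scalemxAl scalerA -expr2 exprVn hs.
by rewrite addrC subrK -/b.
Qed.

Lemma symfact n (M : 'M[F]_n) : M^T = M -> exists B : 'M[F]_n, M = B^T *m B.
Proof.
elim: n M => [|n IH] M hM.
  by exists 0; rewrite !flatmx0.
case: (Classical_Prop.classic (exists u : 'cV[F]_n.+1, (u^T *m M *m u) 0 0 != 0)) => [[u hu]|hno].
  have un0 : u != 0 by apply: contraNneq hu => ->; rewrite mulmx0 mxE.
  have [P [Pu hP]] := col0_unit un0.
  pose M' := P^T *m M *m P.
  have hM' : M'^T = M' by rewrite /M' !trmx_mul trmxK hM mulmxA.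
  have h00 : M' ord0 ord0 != 0.
    rewrite /M' bilE; move: hu; rewrite bilE.
    by under [in X in _ -> X]eq_bigr => j _ do under eq_bigr => k _ do rewrite !hP.
  have [B hB] := corner IH hM' h00.
  exists (B *m invmx P).
  rewrite trmx_mul mulmxA -[_ *m B^T *m B]mulmxA -hB /M'.
  rewrite !mulmxA -trmx_mul mulmxV // trmx1 mul1mx -mulmxA mulmxV // mulmx1 //.
exists 0; rewrite mulmx0; apply: nz_quad => // u.
apply/eqP; apply: contraT => hu; case: hno; by exists u.
Qed.

Lemma householder n (t u : 'cV[F]_n) (sg : F) : sg ^+ 2 = 1 ->
  (u^T *m u) 0 0 = (t^T *m t) 0 0 ->
  (t^T *m t) 0 0 - sg * (u^T *m t) 0 0 != 0 ->
  exists O : 'M[F]_n, O^T *m O = 1%:M /\ O *m t = sg *: u.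
Proof.
move=> hsg huu hne.
set pi := (t^T *m t) 0 0 in huu hne; set d := (u^T *m t) 0 0 in hne.
have e11 : forall A : 'M[F]_1, A = (A 0 0)%:M by move=> A; exact: mx11_scalar.
have eB : forall A B : 'M[F]_1, (A - B) 0 0 = A 0 0 - B 0 0 by move=> A B; rewrite !mxE.
have eD : forall A B : 'M[F]_1, (A + B) 0 0 = A 0 0 + B 0 0 by move=> A B; rewrite !mxE.
have eZ : forall c (A : 'M[F]_1), (c *: A) 0 0 = c * A 0 0 by move=> c A; rewrite !mxE.
have dT : (t^T *m u) 0 0 = d.
  by rewrite /d -[u^T *m t]trmxK trmx_mul trmxK [RHS]mxE.
pose w := t - sg *: u.
have hww : (w^T *m w) 0 0 = 2 * (pi - sg * d).
  rewrite /w [(_ - _)^T]linearB /= [(_ *: _)^T]linearZ /= mulmxBl mulmxBr mulmxBr -!scalemxAl -!scalemxAr.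
  rewrite !eB !eZ dT huu -/pi -/d mulrA -expr2 hsg; ring.
have hwt : (w^T *m t) 0 0 = pi - sg * d.
  by rewrite /w [(_ - _)^T]linearB /= [(_ *: _)^T]linearZ /= mulmxBl -scalemxAl eB eZ.
pose c := 2 / (w^T *m w) 0 0.
have c1 : c * (pi - sg * d) = 1.
  have h2 : (2 : F) != 0 by exact: natF_neq0.
  rewrite /c hww invfM mulrA mulfV // mul1r mulVf //.
exists (1%:M - c *: (w *m w^T)); split.
  rewrite [(_ - _)^T]linearB /= trmx1 [(_ *: _)^T]linearZ /= trmx_mul trmxK.
  rewrite mulmxBl mul1mx mulmxBr mulmx1 -scalemxAl -scalemxAr scalerA.
  have -> : w *m w^T *m (w *m w^T) = ((w^T *m w) 0 0) *: (w *m w^T).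
    rewrite mulmxA -[w *m w^T *m w]mulmxA [w^T *m w]e11 mul_mx_scalar.
    by rewrite -scalemxAl [in RHS]mxE eqxx mulr1n.
  rewrite hww scalerA.
  have -> : c * c * (2 * (pi - sg * d)) = c + c.
    rewrite [LHS](_ : _ = 2 * c * (c * (pi - sg * d))); last by ring.
    by rewrite c1; ring.
  by rewrite scalerDl opprB addrK subrK.
rewrite mulmxBl mul1mx -scalemxAl -mulmxA [w^T *m t]e11 hwt mul_mx_scalar scalerA.
by rewrite c1 scale1r /w opprB addrC subrK.
Qed.

Lemma refl_ex n (t : 'cV[F]_n.+1) : (t^T *m t) 0 0 != 0 ->
  exists O : 'M[F]_n.+1, O^T *m O = 1%:M /\ forall j, (O *m t) j 0 != 0.
Proof.
move=> hpi; set pi := (t^T *m t) 0 0 in hpi.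
have hN : (n.+1%:R : F) != 0 by exact: natF_neq0.
have [a ha] := root_ex (pi / n.+1%:R) (isT : (0 < 2)%N).
have a0 : a != 0.
  apply: contraNneq hpi => a0; move: ha; rewrite a0 expr0n /= => /esym /eqP.
  by rewrite mulf_eq0 invr_eq0 (negbTE hN) orbF.
pose u : 'cV[F]_n.+1 := const_mx a.
have huu : (u^T *m u) 0 0 = pi.
  rewrite mxE; under eq_bigr => j _ do rewrite !mxE.
  by rewrite sumr_const card_ord -mulr_natr -expr2 ha mulfVK.
have key : forall sg : F, sg ^+ 2 = 1 -> pi - sg * (u^T *m t) 0 0 != 0 ->
  exists O : 'M[F]_n.+1, O^T *m O = 1%:M /\ forall j, (O *m t) j 0 != 0.
  move=> sg hsg hne; have [O [hO hOt]] := householder hsg huu hne.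
  exists O; split => // j; rewrite hOt !mxE mulf_neq0 //.
  apply/eqP => sg0; move: hsg; rewrite sg0 expr0n /= => /eqP.
  by rewrite eq_sym oner_eq0.
case: (eqVneq (pi - 1 * (u^T *m t) 0 0) 0) => [h|h]; last by apply: (key 1) => //; rewrite expr1n.
apply: (key (-1)); first by rewrite sqrrN expr1n.
move/eqP: h; rewrite mul1r subr_eq0 => /eqP <-; rewrite mulN1r opprK.
have h2 : (2 : F) != 0 by exact: natF_neq0.
by rewrite -mulr2n -mulr_natr mulf_neq0.
Qed.

Definition cev n (f : 'I_n -> 'I_n -> 'I_n -> F) (x : 'cV[F]_n) : F :=
  \sum_i \sum_j \sum_k f i j k * x i 0 * x j 0 * x k 0.

Lemma sum3 n (G : 'I_n -> 'I_n -> 'I_n -> F) :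
  \sum_i \sum_j \sum_k G i j k = \sum_(t : 'I_n * ('I_n * 'I_n)) G t.1 t.2.1 t.2.2.
Proof.
under eq_bigr => i _ do rewrite pair_big /=.
by rewrite pair_big.
Qed.

Lemma prod3 I (r : seq I) (z : F) (g h k : I -> F) :
  z * (\sum_(a <- r) g a) * (\sum_(b <- r) h b) * (\sum_(c <- r) k c) =
  \sum_(a <- r) \sum_(b <- r) \sum_(c <- r) z * g a * h b * k c.
Proof.
rewrite [z * _]mulr_sumr big_distrlr /= mulr_suml; apply: eq_bigr => a _.
rewrite mulr_suml; apply: eq_bigr => b _.
by rewrite mulr_sumr.
Qed.

Lemma cev_trans n (f : 'I_n -> 'I_n -> 'I_n -> F) (P : 'M[F]_n) (y : 'cV[F]_n) :
  cev (fun a b c => \sum_i \sum_j \sum_k f i j k * P i a * P j b * P k c) y =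
  cev f (P *m y).
Proof.
rewrite /cev.
under [RHS]eq_bigr => i _ do under eq_bigr => j _ do under eq_bigr => k _ do
  rewrite !mxE prod3.
under [RHS]eq_bigr => i _ do under eq_bigr => j _ do under eq_bigr => k _ do
  rewrite sum3.
rewrite [RHS]sum3.
under [LHS]eq_bigr => a _ do under eq_bigr => b _ do under eq_bigr => c _ do
  rewrite sum3 !mulr_suml.
rewrite [LHS]sum3 exchange_big; apply: eq_bigr => t _; apply: eq_bigr => s _ /=.
ring.
Qed.

Lemma cev_cubes n m (A : 'I_m -> 'I_n -> F) (x : 'cV[F]_n) :
  cev (fun i j k => \sum_(l < m) A l i * A l j * A l k) x =
  \sum_(l < m) (\sum_i A l i * x i 0) ^+ 3.
Proof.
have e3 : forall s : F, s ^+ 3 = 1 * s * s * s by move=> s; ring.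
under [RHS]eq_bigr => l _ do rewrite e3 prod3 sum3.
rewrite exchange_big /cev.
under [LHS]eq_bigr => a _ do under eq_bigr => b _ do under eq_bigr => c _ do
  rewrite !mulr_suml.
rewrite [LHS]sum3; apply: eq_bigr => t _; apply: eq_bigr => l _ /=; ring.
Qed.

Lemma cevS1 n (f : 'I_n -> 'I_n -> 'I_n -> F) x : cev (fun i j k => f j i k) x = cev f x.
Proof.
rewrite /cev exchange_big; apply: eq_bigr => i _; apply: eq_bigr => j _.
apply: eq_bigr => k _; ring.
Qed.

Lemma cevS2 n (f : 'I_n -> 'I_n -> 'I_n -> F) x : cev (fun i j k => f i k j) x = cev f x.
Proof.
rewrite /cev; apply: eq_bigr => i _; rewrite exchange_big; apply: eq_bigr => j _.
apply: eq_bigr => k _; ring.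
Qed.

Lemma cevD n (f g : 'I_n -> 'I_n -> 'I_n -> F) x :
  cev (fun i j k => f i j k + g i j k) x = cev f x + cev g x.
Proof.
rewrite /cev -big_split; apply: eq_bigr => i _; rewrite -big_split.
apply: eq_bigr => j _; rewrite -big_split; apply: eq_bigr => k _ /=; ring.
Qed.

Lemma cevB n (f g : 'I_n -> 'I_n -> 'I_n -> F) x :
  cev (fun i j k => f i j k - g i j k) x = cev f x - cev g x.
Proof.
rewrite /cev -sumrB; apply: eq_bigr => i _; rewrite -sumrB.
apply: eq_bigr => j _; rewrite -sumrB; apply: eq_bigr => k _ /=; ring.
Qed.

Lemma cevZ n (c : F) (f : 'I_n -> 'I_n -> 'I_n -> F) x :
  cev (fun i j k => c * f i j k) x = c * cev f x.
Proof.
rewrite /cev mulr_sumr; apply: eq_bigr => i _; rewrite mulr_sumr.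
apply: eq_bigr => j _; rewrite mulr_sumr; apply: eq_bigr => k _ /=; ring.
Qed.

Definition symt n (f : 'I_n -> 'I_n -> 'I_n -> F) i j k :=
  6^-1 * (f i j k + f i k j + f j i k + f j k i + f k i j + f k j i).

Lemma symt1 n f (i j k : 'I_n) : symt f i j k = symt f j i k.
Proof. rewrite /symt; ring. Qed.
Lemma symt2 n f (i j k : 'I_n) : symt f i j k = symt f i k j.
Proof. rewrite /symt; ring. Qed.

Lemma cev_symt n (f : 'I_n -> 'I_n -> 'I_n -> F) x : cev (symt f) x = cev f x.
Proof.
rewrite /symt cevZ !cevD.
have e2 : cev (fun i j k => f i k j) x = cev f x by exact: cevS2.
have e3 : cev (fun i j k => f j i k) x = cev f x by exact: cevS1.
have e4 : cev (fun i j k => f j k i) x = cev f x.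
  by rewrite (cevS1 (fun i j k => f i k j)) cevS2.
have e5 : cev (fun i j k => f k i j) x = cev f x.
  by rewrite (cevS2 (fun i j k => f j i k)) cevS1.
have e6 : cev (fun i j k => f k j i) x = cev f x.
  by rewrite (cevS1 (fun i j k => f k i j)) e5.
rewrite e2 e3 e4 e5 e6.
have h6 : (6 : F) != 0 by exact: natF_neq0.
apply: (canLR (mulKf h6)); ring.
Qed.

Definition qf n (r : 'I_n -> 'I_n -> 'I_n -> F) (P : 'M[F]_n) a b c :=
  \sum_i \sum_j \sum_k r i j k * P i a * P j b * P k c.

Lemma qf_sym1 n r (P : 'M[F]_n) : (forall i j k, r i j k = r j i k) ->
  forall a b c, qf r P a b c = qf r P b a c.
Proof.
move=> h a b c; rewrite /qf exchange_big; apply: eq_bigr => i _; apply: eq_bigr => j _.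
apply: eq_bigr => k _; rewrite (h j i k); ring.
Qed.

Lemma qf_sym2 n r (P : 'M[F]_n) : (forall i j k, r i j k = r i k j) ->
  forall a b c, qf r P a b c = qf r P a c b.
Proof.
move=> h a b c; rewrite /qf; apply: eq_bigr => i _; rewrite exchange_big.
apply: eq_bigr => j _; apply: eq_bigr => k _; rewrite (h i k j); ring.
Qed.

Lemma qf0 n r (P : 'M[F]_n) a : (forall j k, \sum_i r i j k * P i a = 0) ->
  forall b c, qf r P a b c = 0.
Proof.
move=> h b c; rewrite /qf exchange_big; under eq_bigr => j _ do rewrite exchange_big.
apply: big1 => j _; apply: big1 => k _.
by rewrite -!mulr_suml h !mul0r.
Qed.

Lemma cev_zero n (f : 'I_n -> 'I_n -> 'I_n -> F) : cev f 0 = 0.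
Proof.
by apply: big1 => i _; apply: big1 => j _; apply: big1 => k _; rewrite !mxE !mulr0.
Qed.

Lemma part1 n (p : cform F n.+1) :
  exists (lambda : 'M[F]_n.+1) (l : 'I_n.+1 -> 'rV[F]_n.+1) (q : cform F n.+1),
      lambda \in unitmx /\ avoids_first q /\
      forall x : 'cV[F]_n.+1,
        ceval p x = \sum_(j < n.+1) (leval (l j) x) ^+ 3 + ceval q (lambda *m x).
Proof.
pose f := fun i j k => p (i, j, k).
have hpf : forall x, ceval p x = cev f x by [].
case: (Classical_Prop.classic (exists v, cev f v != 0)) => [[v hv]|hno]; last first.
  exists 1%:M, (fun _ => 0), [ffun _ => 0]; split; first exact: unitmx1.
  split; first by move=> i j k _; rewrite ffunE.
  move=> x; rewrite hpf.
  have -> : cev f x = 0 by apply/eqP; apply: contraT => hx; case: hno; exists x.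
  rewrite big1 ?add0r; last by move=> j _; rewrite /leval big1 ?expr0n // => i _; rewrite mxE mul0r.
  by rewrite /ceval big1 // => i _; apply: big1 => j _; apply: big1 => k _; rewrite ffunE !mul0r.
pose ps := symt f.
pose M := \matrix_(j, k) \sum_i ps i j k * v i 0.
have hMs : M^T = M.
  apply/matrixP => j k; rewrite !mxE; apply: eq_bigr => i _; by rewrite /ps -symt2.
have [B hB] := symfact hMs.
have hvMv : (v^T *m M *m v) 0 0 = cev f v.
  rewrite bilE -(cev_symt f) /cev.
  under eq_bigr => j _ do under eq_bigr => k _ do rewrite mxE mulr_sumr mulr_suml.
  rewrite exchange_big; under eq_bigr => j _ do rewrite exchange_big.
  rewrite exchange_big; apply: eq_bigr => i _; apply: eq_bigr => j _; apply: eq_bigr => k _.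
  rewrite /ps -symt2; ring.
have htt : ((B *m v)^T *m (B *m v)) 0 0 != 0.
  by rewrite trmx_mul -mulmxA [B^T *m _]mulmxA -hB mulmxA hvMv.
have [O [hO hOt]] := refl_ex htt.
pose B' := O *m B.
have hB' : M = B'^T *m B'.
  by rewrite /B' trmx_mul -mulmxA [O^T *m _]mulmxA hO mul1mx.
pose sv j := (B' *m v) j 0.
have hsv : forall j, sv j != 0 by move=> j; rewrite /sv /B' -mulmxA.
have rex : forall j, exists c : F, c ^+ 3 == (sv j)^-1.
  by move=> j; have [c hc] := root_ex (sv j)^-1 (isT : (0 < 3)%N); exists c; apply/eqP.
pose cr j := xchoose (rex j).
have hcr : forall j, cr j ^+ 3 * sv j = 1.
  by move=> j; rewrite (eqP (xchooseP (rex j))) mulVf.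
pose A := \matrix_(m, i) (cr m * B' m i).
pose L := fun i j k => \sum_(m < n.+1) A m i * A m j * A m k.
have hL : forall j k, \sum_i L i j k * v i 0 = M j k.
  move=> j k; rewrite hB' mxE /L.
  under eq_bigr => i _ do rewrite mulr_suml.
  rewrite exchange_big; apply: eq_bigr => m _.
  rewrite [B'^T j m]mxE -(mul1r (B' m j * B' m k)) -(hcr m) /sv [(B' *m v) m 0]mxE mulr_sumr mulr_suml.
  by apply: eq_bigr => i _; rewrite !mxE; ring.
pose rs := fun i j k => ps i j k - L i j k.
have vn0 : v != 0 by apply: contraNneq hv => ->; rewrite cev_zero.
have [P [Pu hP]] := col0_unit vn0.
have hrs : forall j k, \sum_i rs i j k * P i ord0 = 0.
  move=> j k; under eq_bigr => i _ do rewrite hP /rs mulrBl.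
  rewrite sumrB hL mxE; exact: subrr.
have rs1 : forall i j k, rs i j k = rs j i k.
  move=> i j k; rewrite /rs /ps -symt1 /L; congr (_ - _).
  by apply: eq_bigr => m _; ring.
have rs2 : forall i j k, rs i j k = rs i k j.
  move=> i j k; rewrite /rs /ps -symt2 /L; congr (_ - _).
  by apply: eq_bigr => m _; ring.
have q0 := qf0 hrs.
have q1 := qf_sym1 P rs1.
have q2 := qf_sym2 P rs2.
exists (invmx P), (fun m => row m A), [ffun t => qf rs P t.1.1 t.1.2 t.2].
split; first by rewrite unitmx_inv.
split.
  move=> i j k; rewrite ffunE /=.
  have e0 : forall a : 'I_n.+1, val a == 0%N -> a = ord0 by move=> a /eqP ha; exact: val_inj.
  case/orP => [/orP [/e0 -> | /e0 ->] | /e0 ->]; first exact: q0.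
    by rewrite q1 q0.
  by rewrite q2 q1 q0.
move=> x.
have -> : ceval [ffun t => qf rs P t.1.1 t.1.2 t.2] (invmx P *m x) =
          cev (qf rs P) (invmx P *m x).
  by rewrite /ceval /cev; apply: eq_bigr => i _; apply: eq_bigr => j _;
     apply: eq_bigr => k _; rewrite ffunE.
rewrite /qf cev_trans mulKVmx // hpf -(cev_symt f) -/ps.
have -> : \sum_(j < n.+1) leval (row j A) x ^+ 3 = cev L x.
  rewrite cev_cubes; apply: eq_bigr => m _; congr (_ ^+ 3).
  by apply: eq_bigr => i _; rewrite mxE.
rewrite /rs cevB; ring.
Qed.

Lemma leval_mx m (a : 'rV[F]_m) x : leval a x = (a *m x) 0 0.
Proof. by rewrite mxE. Qed.

Lemma part2 k : forall (m : nat) (C : cform F k) (U : 'M[F]_(k, m)),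
  exists s : seq 'rV[F]_m, (size s <= 'C(k.+1, 2))%N /\
    forall x, ceval C (U *m x) = \sum_(a <- s) (leval a x) ^+ 3.
Proof.
elim: k => [|k IH] m C U.
  by exists [::]; split => // x; rewrite big_nil /ceval big_ord0.
have [lam [l [q [hu [hq he]]]]] := part1 C.
pose q' : cform F k := [ffun t => q (lift ord0 t.1.1, lift ord0 t.1.2, lift ord0 t.2)].
have hq' : forall y : 'cV[F]_k.+1, ceval q y = ceval q' (\col_i y (lift ord0 i) 0).
  move=> y; rewrite /ceval big_ord_recl big1 ?add0r; last first.
    by move=> j _; apply: big1 => i _; rewrite hq ?mul0r.
  apply: eq_bigr => i _; rewrite big_ord_recl big1 ?add0r; last first.
    by move=> j _; rewrite hq ?mul0r ?orbT.
  apply: eq_bigr => j _; rewrite big_ord_recl hq ?mul0r ?add0r ?orbT //.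
  by apply: eq_bigr => c _; rewrite ffunE !mxE.
pose U' : 'M[F]_(k, m) := \matrix_(i, j) (lam *m U) (lift ord0 i) j.
have [s' [hs' he']] := IH m q' U'.
exists ([seq l j *m U | j <- enum 'I_k.+1] ++ s'); split.
  rewrite size_cat size_map size_enum_ord binS bin1 addnC.
  by rewrite leq_add2r.
move=> x; rewrite he big_cat /= big_map hq'.
have -> : \col_i (lam *m (U *m x)) (lift ord0 i) 0 = U' *m x.
  apply/matrixP => i j; rewrite (ord1 j) mulmxA [LHS]mxE [RHS]mxE.
  by rewrite mxE; apply: eq_bigr => c _; rewrite !mxE.
rewrite -he'; congr (_ + _).
rewrite big_enum /=; apply: eq_bigr => j _.
by rewrite !leval_mx mulmxA.
Qed.

End S.

Unset Implicit Arguments. Set Strict Implicit. Set Printing Implicit Defensive.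

Theorem theorem6p2 (F : closedFieldType) (hchar : [pchar F] =i pred0)
    (n : nat) (hn : (1 <= n)%N) (p : cform F n) :
  (exists (lambda : 'M[F]_n) (l : 'I_n -> 'rV[F]_n) (q : cform F n),
      lambda \in unitmx /\ avoids_first q /\
      forall x : 'cV[F]_n,
        ceval p x = \sum_(j < n) (leval (l j) x) ^+ 3 + ceval q (lambda *m x))
  /\
  (exists s : seq 'rV[F]_n,
      (size s <= 'C(n.+1, 2))%N /\
      forall x : 'cV[F]_n, ceval p x = \sum_(a <- s) (leval a x) ^+ 3).
Proof.
split.
  by case: n hn p => // n _ p; exact: part1.
have [s [hs he]] := part2 hchar p (1%:M : 'M[F]_n).
by exists s; split => // x; rewrite -he mul1mx.
Qed.
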